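(* Every locally stable commutative ring $R$ has stable range 2; that is, whenever $a,b,c\in R$ satisfy $aR+bR+cR=R$, there exist $y,z\in R$ such that $(a+cy)R+(b+cz)R=R$.
   Context: All rings are commutative with identity. A ring $S$ has stable range 1 if whenever $aS+bS=S$ there is $y\in S$ with $a+by$ a unit. $R$ is locally stable if whenever $a,b\in R$ with $aR+bR=R$ there is $y\in R$ such that $R/(a+by)R$ has stable range 1. *)

(* Defs.v *)
From mathcomp Require Import all_boot all_algebra.
Set Implicit Arguments. Unset Strict Implicit. Unset Printing Implicit Defensive.
Import GRing.Theory.
Local Open Scope ring_scope.

Definition in_pideal (R : comPzRingType) (x r : R) : Prop := exists s : R, r = x * s.

(* aR + bR = R  <->  exists s t, a s + b t = 1 *)
Definition comax2 (R : comPzRingType) (a b : R) : Prop :=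
  exists s t : R, a * s + b * t = 1.

Definition comax3 (R : comPzRingType) (a b c : R) : Prop :=
  exists s t u : R, a * s + b * t + c * u = 1.

(* Stable range 1 of the quotient R/xR, written via representatives in R:
   for classes abar = a + xR, bbar = b + xR, abar S + bbar S = S means
   a s + b t - 1 in xR for some s t; and abar + bbar ybar is a unit of R/xR
   means (a + b y) v - 1 in xR for some v. *)
Definition sr1_quot (R : comPzRingType) (x : R) : Prop :=
  forall a b : R, (exists s t : R, in_pideal x (a * s + b * t - 1)) ->
    exists y v : R, in_pideal x ((a + b * y) * v - 1).

Definition locally_stable (R : comPzRingType) : Prop :=
  forall a b : R, comax2 a b -> exists y : R, sr1_quot (a + b * y).

Definition sr2 (R : comPzRingType) : Prop :=
  forall a b c : R, comax3 a b c ->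
    exists y z : R, comax2 (a + c * y) (b + c * z).

(* Main.v *)
Require Import Defs.
From mathcomp Require Import all_boot all_algebra.
From mathcomp Require Import ring.
Import GRing.Theory.
Local Open Scope ring_scope.

Theorem lemma3p1 (R : comPzRingType) : locally_stable R -> sr2 R.
Proof.
move=> LS a b c [s [t [u H]]].
have [y Hy] : exists y, sr1_quot (b + (a * s + c * u) * y).
  apply: LS; exists t, 1; rewrite mulr1 -H; ring.
set e := b + (a * s + c * u) * y.
have [y1 [v [w Hw]]] : exists y1 v, in_pideal e ((a + c * y1) * v - 1).
  apply: Hy; exists (s - s * y * t), (u - u * y * t); exists (- t).
  rewrite /e -H; ring.
exists y1, (u * y - y1 * s * y).
exists (v - s * y * w), (- w).
have E : (a + c * y1) * v - 1 + 1 = e * w + 1 by rewrite Hw.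
rewrite subrK in E.
transitivity ((a + c * y1) * v - e * w); last by rewrite E; ring.
rewrite /e; ring.
Qed.
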